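(* Let $M$ be an $n$-dimensional path-connected manifold, let $\psi_t$ be a complete flow on $M$, and let $\Sigma\subset M$ be a global Poincar\'e section of $\psi$ that is relatively closed in $M$. Let $T:\Sigma\to\mathbb{R}^+$ be the first return time, $r_\psi(\sigma)=\psi_{T(\sigma)}(\sigma)$ the first return map, $p:\Sigma\times\mathbb{R}\to M$, $p(\sigma,\tau)=\psi_\tau(\sigma)$, and $\Delta:\Sigma\times\mathbb{R}\to\Sigma\times\mathbb{R}$, $\Delta(\sigma,\tau)=(r_\psi(\sigma),\tau-T(\sigma))$. Then for each $x\in M$ and each $(\sigma_0,\tau_0)\in\Sigma\times\mathbb{R}$ with $p(\sigma_0,\tau_0)=x$, \[ p^{-1}(x)=\{\Delta^n(\sigma_0,\tau_0): n\in\mathbb{Z}\}. \]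
   Context: A relatively closed, codimension-one submanifold $\Sigma\hookrightarrow M$ is a Poincar\'e section of a flow $\psi$ if it is transverse to the flow; it is a global Poincar\'e section of a complete flow if every orbit of the flow has both forward and backward transversal intersections with $\Sigma$. ''Relatively closed'' means: any sequence in $\Sigma$ converging in $M$ converges in $\Sigma$. The first return time $T(\sigma)$ is the smallest positive number with $\psi_{T(\sigma)}(\sigma)\in\Sigma$. *)

(* Defs.v *)
From HB Require Import structures.
From mathcomp Require Import all_boot all_order all_algebra.
From mathcomp Require Import all_classical all_reals all_analysis.
Set Implicit Arguments. Unset Strict Implicit. Unset Printing Implicit Defensive.
Import Order.TTheory GRing.Theory Num.Theory.
Import numFieldNormedType.Exports.
Local Open Scope classical_set_scope.
Local Open Scope ring_scope.

Record chart (R : realType) (M : topologicalType) (n : nat) := Chart {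
  ch_dom : set M;
  ch_map : M -> 'rV[R]_n;
  ch_inv : 'rV[R]_n -> M;
  ch_open : open ch_dom;
  ch_img_open : open (ch_map @` ch_dom);
  ch_cont : {within ch_dom, continuous ch_map};
  ch_inv_cont : {within ch_map @` ch_dom, continuous ch_inv};
  ch_left : forall x, ch_dom x -> ch_inv (ch_map x) = x;
  ch_right : forall v, (ch_map @` ch_dom) v -> ch_map (ch_inv v) = v }.

Definition diff_atlas (R : realType) (M : topologicalType) (n : nat)
  (A : set (chart R M n)) : Prop :=
  (forall x : M, exists c, A c /\ ch_dom c x) /\
  (forall c1 c2, A c1 -> A c2 -> forall v,
     (ch_map c1 @` (ch_dom c1 `&` ch_dom c2)) v ->
     differentiable (ch_map c2 \o ch_inv c1) v).

Definition path_connected_space (R : realType) (M : topologicalType) : Prop :=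
  forall x y : M, exists g : R -> M,
    {within `[0, 1], continuous g} /\ g 0 = x /\ g 1 = y.

Definition complete_flow (R : realType) (M : topologicalType) (psi : R -> M -> M) : Prop :=
  (forall x, psi 0 x = x) /\
  (forall s t x, psi (s + t) x = psi s (psi t x)) /\
  continuous (fun q : R * M => psi q.1 q.2).

Definition flow_differentiable (R : realType) (M : topologicalType) (n : nat)
  (A : set (chart R M n)) (psi : R -> M -> M) : Prop :=
  (forall c, A c -> forall (x : M) (t0 : R), ch_dom c (psi t0 x) ->
     derivable (fun t : R => ch_map c (psi t x)) t0 1) /\
  (forall c1 c2 (t : R), A c1 -> A c2 -> forall v,
     (ch_map c1 @` (ch_dom c1 `&` (psi t @^-1` ch_dom c2))) v ->
     differentiable (ch_map c2 \o psi t \o ch_inv c1) v).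

(* Sigma is a codimension-one (embedded) submanifold transverse to the flow:
   around each point of Sigma there is a chart of the atlas in which Sigma is
   the coordinate hyperplane {y_i = 0}, and the flow's velocity has nonzero
   i-th component (i.e. it is not tangent to Sigma). *)
Definition poincare_section (R : realType) (M : topologicalType) (n : nat)
  (A : set (chart R M n)) (psi : R -> M -> M) (Sigma : set M) : Prop :=
  forall s, Sigma s -> exists c, A c /\ ch_dom c s /\
    exists i : 'I_n,
      (forall y, ch_dom c y -> (Sigma y <-> ch_map c y ord0 i = 0)) /\
      derivable (fun t : R => ch_map c (psi t s) ord0 i) 0 1 /\
      derive1 (fun t : R => ch_map c (psi t s) ord0 i) 0 != 0.

(* Global section: every orbit meets Sigma both forward and backward in time
   (intersections are transversal since Sigma is transverse everywhere). *)
Definition global_section (R : realType) (M : topologicalType)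
  (psi : R -> M -> M) (Sigma : set M) : Prop :=
  forall x : M, (exists t, 0 < t /\ Sigma (psi t x)) /\
                (exists t, t < 0 /\ Sigma (psi t x)).

Definition rel_closed (M : topologicalType) (Sigma : set M) : Prop :=
  forall u : nat -> M, (forall k, Sigma (u k)) ->
    forall x : M, u @ \oo --> x -> exists y, Sigma y /\ u @ \oo --> y.

Definition first_return_time (R : realType) (M : topologicalType)
  (psi : R -> M -> M) (Sigma : set M) (T : M -> R) : Prop :=
  forall s, Sigma s ->
    0 < T s /\ Sigma (psi (T s) s) /\
    (forall t, 0 < t < T s -> ~ Sigma (psi t s)).

(* Main.v *)
Require Import Defs.
From HB Require Import structures.
From mathcomp Require Import all_boot all_order all_algebra.
From mathcomp Require Import all_classical all_reals all_analysis.
Import Order.TTheory GRing.Theory Num.Theory.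
Import numFieldNormedType.Exports.
Local Open Scope classical_set_scope.
Local Open Scope ring_scope.

Section S.
Context (R : realType) (M : topologicalType) (n : nat)
  (A : set (chart R M n)) (psi : R -> M -> M) (Sigma : set M) (T : M -> R).
Hypotheses (Hh : hausdorff_space M) (Hf : complete_flow psi)
  (Hp : poincare_section A psi Sigma) (Hr : rel_closed Sigma)
  (HT : first_return_time psi Sigma T).

Lemma psi_add s t x : psi s (psi t x) = psi (s + t) x.
Proof. by case: Hf => _ [-> _]. Qed.

Lemma psi_inv t s : psi (- t) (psi t s) = s.
Proof. by rewrite psi_add addNr; case: Hf => ->. Qed.

Lemma no_accum x0 (tau : nat -> R) L : tau @ \oo --> L ->
  (forall k, tau k != L) -> (forall k, Sigma (psi (tau k) x0)) -> False.
Proof.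
move=> tauL tauN Stau.
have uz : (fun k => psi (tau k) x0) @ \oo --> psi L x0.
  have hc := Hf.2.2 (L, x0).
  exact: (@continuous2_cvg nat R M M _ _ tau (fun=> x0) psi L x0 hc tauL (cvg_cst _)).
have [y [Sy uy]] := Hr _ Stau _ uz.
have yz : y = psi L x0 by exact: (@cvg_unique M Hh _ _ y (psi L x0) uy uz).
subst y; set z := psi L x0.
have [c [Ac [dz [i [Hsig [Hder Hne]]]]]] := Hp _ Sy.
set g := fun t => ch_map c (psi t z) ord0 i.
have key : forall k, psi (tau k - L) z = psi (tau k) x0.
  by move=> k; rewrite /z psi_add subrK.
have ev : \forall k \near \oo, ch_dom c (psi (tau k) x0).
  by apply: uz; apply: open_nbhs_nbhs; split => //; exact: ch_open.
have g0 : g 0 = 0.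
  by rewrite /g; case: Hf => -> _; apply/(Hsig z dz).
set Fd := fun h : R => h^-1 *: ((g \o shift 0) (h *: 1) - g 0).
have Fl : Fd @ 0^' --> lim (Fd @ 0^') by exact: Hder.
have u0 : (fun k => tau k - L) @ \oo --> 0.
  by rewrite -(subrr L); apply: cvgB => //; exact: cvg_cst.
have hneq : forall k, tau k - L != 0 by move=> k; rewrite subr_eq0.
have Fu := (cvgr_dnbhsP Fd 0 (lim (Fd @ 0^'))).1 Fl (fun k => tau k - L) (conj hneq u0).
have Fz : \forall k \near \oo, Fd (tau k - L) = 0.
  apply: filterS ev => k dk.
  rewrite /Fd /= /shift addr0 g0 subr0.
  have -> : (tau k - L)%:A = tau k - L by rewrite /GRing.scale /= mulr1.
  rewrite /g key.
  have := (Hsig _ dk).1 (Stau k) => ->.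
  by rewrite scaler0.
have Fu0 : Fd (tau k - L) @[k --> \oo] --> (0 : R).
  by apply: cvg_near_cst.
have e0 : lim (Fd @ 0^') = 0.
  have H := @cvg_unique _ (@Rhausdorff R) _ _ _ _ Fu.
  exact: (H _ _ Fu0).
move: Hne; rewrite derive1E /derive => /negP; apply; apply/eqP; exact: e0.
Qed.

Definition D := fun q : M * R => (psi (T q.1) q.1, q.2 - T q.1).

Lemma it_inv q : Sigma q.1 -> forall k,
  Sigma (iter k D q).1 /\ psi (iter k D q).2 (iter k D q).1 = psi q.2 q.1.
Proof.
move=> Sq; elim=> [|k [Sk Pk]] //=.
have [_ [S1 _]] := HT _ Sk.
by split => //; rewrite psi_add subrK.
Qed.

Lemma it_eq q q' k : Sigma q.1 -> psi q.2 q.1 = psi q'.2 q'.1 ->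
  (iter k D q).2 = q'.2 -> iter k D q = q'.
Proof.
move=> Sq E E2; have [_ P] := it_inv q Sq k.
case: q' E E2 => s' t' /= E E2.
rewrite [iter k D q]surjective_pairing E2; congr pair.
by have := congr1 (psi (- t')) P; rewrite E2 E !psi_inv.
Qed.

Lemma lemC q q' : Sigma q.1 -> Sigma q'.1 -> psi q.2 q.1 = psi q'.2 q'.1 ->
  q'.2 <= q.2 -> exists k, iter k D q = q'.
Proof.
move=> Sq Sq' E le.
set b := fun k => (iter k D q).2.
set a := fun k => (iter k D q).1.
have Sa : forall k, Sigma (a k) by move=> k; exact: (it_inv q Sq k).1.
have Pa : forall k, psi (b k) (a k) = psi q.2 q.1 by move=> k; exact: (it_inv q Sq k).2.
have bS : forall k, b k.+1 = b k - T (a k) by [].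
have blt : forall k, b k.+1 < b k.
  by move=> k; rewrite bS ltrBlDr ltrDl; have [] := HT _ (Sa k).
have [[k bk]|nE] := pselect (exists k, b k = q'.2).
  by exists k; exact: (it_eq q q' k Sq E bk).
exfalso.
have [[k bk]|nL] := pselect (exists k, b k < q'.2).
  have ex : exists k, b k < q'.2 by exists k.
  case: (ex_minnP ex) => m bm mmin.
  have m0 : (0 < m)%N.
    rewrite lt0n; apply/negP => /eqP m0; move: bm; rewrite m0 /b /=.
    by rewrite ltNge le.
  have bj : q'.2 < b m.-1.
    rewrite lt_neqAle; apply/andP; split.
      by apply/negP => /eqP h; apply: nE; exists m.-1.
    rewrite leNgt; apply/negP => /mmin.
    by rewrite leqNgt ltn_predL m0.
  have E' : psi (b m.-1 - q'.2) (a m.-1) = q'.1.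
    by rewrite addrC -psi_add (Pa m.-1) E psi_inv.
  have [_ [_ H]] := HT _ (Sa m.-1).
  apply: (H (b m.-1 - q'.2)); last by rewrite E'.
  apply/andP; split; first by rewrite subr_gt0.
  by rewrite ltrBlDr -ltrBlDl -bS prednK.
have bge : forall k, q'.2 < b k.
  move=> k; rewrite lt_neqAle; apply/andP; split.
    by apply/negP => /eqP h; apply: nE; exists k.
  by rewrite leNgt; apply/negP => h; apply: nL; exists k.
have ni : nonincreasing_seq b.
  by apply/nonincreasing_seqP => k; exact/ltW.
have lb : has_lbound (range b).
  by exists q'.2 => _ [k _ <-]; exact/ltW.
have cb := nonincreasing_is_cvgn ni lb.
have geL := nonincreasing_cvgn_ge ni cb.
apply: (@no_accum (psi q.2 q.1) (fun k => - b k) (- limn b)).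
- exact: cvgN.
- move=> k; rewrite eqr_opp; apply/negP => /eqP h.
  by have := blt k; rewrite h ltNge geL.
- by move=> k /=; rewrite -(Pa k) psi_inv.
Qed.

End S.

Theorem lemma2p2 (R : realType) (M : topologicalType) (n : nat)
  (A : set (chart R M n)) (psi : R -> M -> M) (Sigma : set M) (T : M -> R) :
  hausdorff_space M ->
  diff_atlas A ->
  path_connected_space R M ->
  complete_flow psi ->
  flow_differentiable A psi ->
  poincare_section A psi Sigma ->
  global_section psi Sigma ->
  rel_closed Sigma ->
  first_return_time psi Sigma T ->
  let r := fun s : M => psi (T s) s in
  let p := fun q : M * R => psi q.2 q.1 in
  let Delta := fun q : M * R => (r q.1, q.2 - T q.1) in
  forall (x : M) (s0 : M) (t0 : R), Sigma s0 -> p (s0, t0) = x ->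
    [set q : M * R | Sigma q.1 /\ p q = x] =
      [set q | exists k : nat, q = iter k Delta (s0, t0)] `|`
      [set q | Sigma q.1 /\ exists k : nat, iter k Delta q = (s0, t0)].
Proof.
move=> Hh _ _ Hf _ Hp _ Hr HT r p Delta x s0 t0 Ss0 px.
have DE : Delta = D R M psi T by [].
rewrite DE -px /p /=.
apply/seteqP; split.
- move=> [s t] /= [Ss E].
  have [tle|tgt] := leP t t0.
    have [k Hk] := lemC R M n A psi Sigma T Hh Hf Hp Hr HT (s0, t0) (s, t) Ss0 Ss (esym E) tle.
    by left; exists k.
  have [k Hk] := lemC R M n A psi Sigma T Hh Hf Hp Hr HT (s, t) (s0, t0) Ss Ss0 E (ltW tgt).
  by right; split => //; exists k.
- move=> q [[k ->]|[Sq [k Hk]]].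
    exact: (it_inv R M psi Sigma T Hf HT (s0, t0) Ss0 k).
  split => //; have := (it_inv R M psi Sigma T Hf HT q Sq k).2; rewrite Hk /= => ->.
  done.
Qed.
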